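(* Let $N,G,N_t,K$ be positive integers ($K\ge 0$ integer), $T_s>0$, $\sigma>0$, and let $\boldsymbol s^{(g,n)}\in\mathbb C^{N_t}$ be known pilot vectors for $g=1,\dots,G$, $n=0,\dots,N-1$. Let $\boldsymbol\alpha(\theta)\triangleq[1,e^{-j\pi\sin\theta},\dots,e^{-j\pi(N_t-1)\sin\theta}]^{\mathrm T}\in\mathbb C^{N_t}$. For unknown deterministic parameters $\boldsymbol\tau^\star=[\tau^\star_0,\dots,\tau^\star_K]^{\mathrm T}$, $\boldsymbol\theta^\star_{\mathrm{Tx}}=[\theta^\star_{\mathrm{Tx},0},\dots,\theta^\star_{\mathrm{Tx},K}]^{\mathrm T}$, $\boldsymbol\gamma^\star=[\gamma^\star_0,\dots,\gamma^\star_K]^{\mathrm T}\in\mathbb C^{K+1}$ and $\boldsymbol\Delta=[\Delta_\tau,\Delta_\theta]^{\mathrm T}$, define $$\boldsymbol h^{(n)}=\sum_{k=0}^K\gamma^\star_k e^{-j2\pi n\tau^\star_k/(NT_s)}\boldsymbol\alpha(\theta^\star_{\mathrm{Tx},k})^{\mathrm H},\qquad \boldsymbol\Phi^{(n)}=e^{-j2\pi n\Delta_\tau/(NT_s)}\operatorname{diag}\big(\boldsymbol\alpha(\Delta_\theta)^{\mathrm H}\big),$$ and noise-free observations $u^{(g,n)}=\boldsymbol h^{(n)}\boldsymbol\Phi^{(n)}\boldsymbol s^{(g,n)}$, observed in i.i.d. $\mathcal{CN}(0,\sigma^2)$ noise. Let $\boldsymbol\chi=[(\boldsymbol\tau^\star)^{\mathrm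 T},(\boldsymbol\theta^\star_{\mathrm{Tx}})^{\mathrm T},\mathfrak R\{\boldsymbol\gamma^\star\}^{\mathrm T},\mathfrak I\{\boldsymbol\gamma^\star\}^{\mathrm T},\boldsymbol\Delta^{\mathrm T}]^{\mathrm T}\in\mathbb R^{4K+6}$ and let $$\boldsymbol J_{\boldsymbol\chi}=\frac{2}{\sigma^2}\sum_{n=0}^{N-1}\sum_{g=1}^G\mathfrak R\Big\{\big(\nabla_{\boldsymbol\chi}u^{(g,n)}\big)^{*}\big(\nabla_{\boldsymbol\chi}u^{(g,n)}\big)^{\mathrm T}\Big\}\in\mathbb R^{(4K+6)\times(4K+6)}$$ be the associated Fisher information matrix. Then $\boldsymbol J_{\boldsymbol\chi}$ is singular.
   Context: $\nabla_{\boldsymbol\chi}u^{(g,n)}$ denotes the column vector of partial derivatives of $u^{(g,n)}$ with respect to the entries of $\boldsymbol\chi$; $(\cdot)^*$ is entrywise complex conjugation and $(\cdot)^{\mathrm H}$ the conjugate transpose. This models an eavesdropper who knows the structure of the precoder $\boldsymbol\Phi^{(n)}$ but not the shift parameters $\boldsymbol\Delta$. *)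

(* Defs.v *)
From HB Require Import structures.
From mathcomp Require Import all_boot all_order all_algebra.
From mathcomp Require Import all_classical all_reals all_analysis.
From mathcomp Require Import complex.
Set Implicit Arguments. Unset Strict Implicit. Unset Printing Implicit Defensive.
Import Order.TTheory GRing.Theory Num.Theory.
Local Open Scope ring_scope.

Section Model.
Variable R : realType.

Definition cexpj (x : R) : R[i] := (cos x +i* sin x)%C.

Definition herm m n (A : 'M[R[i]]_(m, n)) : 'M[R[i]]_(n, m) := (map_mx conjc A)^T.

Definition steer (Nt : nat) (th : R) : 'cV[R[i]]_Nt :=
  \col_(i < Nt) cexpj (- (pi * i%:R * sin th)).

Definition chan (N Nt K : nat) (Ts : R) (tau th : 'I_K.+1 -> R)
    (gam : 'I_K.+1 -> R[i]) (n : nat) : 'rV[R[i]]_Nt :=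
  \sum_(k < K.+1)
     (gam k * cexpj (- (2 * pi * n%:R * tau k / (N%:R * Ts)))) *: herm (steer Nt (th k)).

Definition precoder (N Nt : nat) (Ts : R) (dtau dth : R) (n : nat) : 'M[R[i]]_Nt :=
  cexpj (- (2 * pi * n%:R * dtau / (N%:R * Ts))) *: diag_mx (herm (steer Nt dth)).

(* Layout of chi in R^{4K+6} = R^{(4K+5).+1}:
   [tau_0..tau_K, theta_0..theta_K, Re gamma_0..Re gamma_K, Im gamma_0..Im gamma_K,
    Delta_tau, Delta_theta]. *)
Definition chi_tau K (chi : 'rV[R]_((4 * K + 5).+1)) (k : 'I_K.+1) : R :=
  chi 0 (inord k).
Definition chi_th K (chi : 'rV[R]_((4 * K + 5).+1)) (k : 'I_K.+1) : R :=
  chi 0 (inord (K.+1 + k)).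
Definition chi_gam K (chi : 'rV[R]_((4 * K + 5).+1)) (k : 'I_K.+1) : R[i] :=
  (chi 0 (inord (2 * K.+1 + k)) +i* chi 0 (inord (3 * K.+1 + k)))%C.
Definition chi_dtau K (chi : 'rV[R]_((4 * K + 5).+1)) : R := chi 0 (inord (4 * K + 4)).
Definition chi_dth K (chi : 'rV[R]_((4 * K + 5).+1)) : R := chi 0 (inord (4 * K + 5)).

Definition obs (N Nt K : nat) (Ts : R) (s : 'cV[R[i]]_Nt) (n : nat)
    (chi : 'rV[R]_((4 * K + 5).+1)) : R[i] :=
  (@chan N Nt K Ts (chi_tau chi) (chi_th chi) (chi_gam chi) n
     *m @precoder N Nt Ts (chi_dtau chi) (chi_dth chi) n *m s) 0 0.

Definition cpartial d (f : 'rV[R]_d -> R[i]) (chi : 'rV[R]_d) (a : 'I_d) : R[i] :=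
  ('D_(delta_mx 0 a) (fun x => complex.Re (f x)) chi
   +i* 'D_(delta_mx 0 a) (fun x => complex.Im (f x)) chi)%C.

Definition FIM (N G Nt K : nat) (Ts sigma : R)
    (s : 'I_G -> 'I_N -> 'cV[R[i]]_Nt) (chi : 'rV[R]_((4 * K + 5).+1))
    : 'M[R]_((4 * K + 5).+1) :=
  (2 / sigma ^+ 2) *:
    \sum_(n < N) \sum_(g < G)
      \matrix_(a, b)
        complex.Re (conjc (cpartial (@obs N Nt K Ts (s g n) n) chi a)
                    * cpartial (@obs N Nt K Ts (s g n) n) chi b).

End Model.

(* Main.v *)
Set Warnings "-all".
Require Import Defs.
From HB Require Import structures.
From mathcomp Require Import all_boot all_order all_algebra.
From mathcomp Require Import all_classical all_reals all_analysis.
From mathcomp Require Import complex.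
From mathcomp Require Import ring lra zify.
Import Order.TTheory GRing.Theory Num.Theory.
Import numFieldNormedType.Exports.
Local Open Scope ring_scope.
Set Implicit Arguments. Unset Strict Implicit.
Section S.
Variable R : realType.
Lemma cexpjD (a b : R) : cexpj a * cexpj b = cexpj (a + b).
Proof. rewrite /cexpj cosD sinD /=. congr (_ +i* _)%C; ring. Qed.

Definition EE (N : nat) (Ts : R) (n : nat) (x : R) : R[i] :=
  cexpj (- (2 * pi * n%:R * x / (N%:R * Ts))).
Lemma EED N Ts n a b : EE N Ts n a * EE N Ts n b = EE N Ts n (a + b).
Proof. rewrite /EE cexpjD; congr cexpj; ring. Qed.

Definition cc (Nt K : nat) (s : 'cV[R[i]]_Nt) (chi : 'rV[R]_((4 * K + 5).+1)) (k : 'I_K.+1) : R[i] :=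
  chi_gam chi k * (herm (steer Nt (chi_th chi k)) *m diag_mx (herm (steer Nt (chi_dth chi))) *m s) 0 0.

Lemma obsE N Nt K Ts s n chi : @obs R N Nt K Ts s n chi =
  \sum_(k < K.+1) cc s chi k * EE N Ts n (chi_tau chi k + chi_dtau chi).
Proof.
rewrite /obs /chan /precoder mulmx_suml mulmx_suml summxE.
apply: eq_bigr => k _.
rewrite -!scalemxAl -scalemxAr -scalemxAl.
set M := (herm _ *m _ *m s).
rewrite !mxE /cc -/M -EED /EE.
rewrite /M [in RHS]mxE; ring.

Qed.

Lemma shiftE K (chi : 'rV[R]_((4 * K + 5).+1)) (h : R) p m :
  (p < (4 * K + 5).+1)%N -> (m < (4 * K + 5).+1)%N ->
  (h *: delta_mx 0 (inord p) + chi) 0 (inord m) = chi 0 (inord m) + (if p == m then h else 0).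
Proof.
move=> hp hm; rewrite !mxE eqxx /=.
have -> : ((inord m : 'I_(4 * K + 5).+1) == inord p) = (p == m).
  by rewrite -val_eqE /= !inordK // eq_sym.
by case: (p == m); rewrite ?mulr1 ?mulr0 addrC.
Qed.

Definition sh K (chi : 'rV[R]_((4 * K + 5).+1)) (h : R) p :=
  h *: delta_mx 0 (inord p) + chi.

Lemma sh_tau K chi h (j k : 'I_K.+1) :
  chi_tau (sh chi h j) k = chi_tau chi k + (if (j : nat) == k then h else 0).
Proof. rewrite /chi_tau /sh shiftE //; apply: (leq_trans (ltn_ord _)); lia. Qed.

Lemma sh_other K (chi : 'rV[R]_((4 * K + 5).+1)) h p m :
  (p < (4 * K + 5).+1)%N -> (m < (4 * K + 5).+1)%N -> p != m ->
  (sh chi h p) 0 (inord m) = chi 0 (inord m) :> R.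
Proof. by move=> hp hm /negbTE pm; rewrite /sh shiftE // pm addr0. Qed.

Lemma sh_same K (chi : 'rV[R]_((4 * K + 5).+1)) h p :
  (p < (4 * K + 5).+1)%N -> (sh chi h p) 0 (inord p) = chi 0 (inord p) + h :> R.
Proof. by move=> hp; rewrite /sh shiftE // eqxx. Qed.

Section Sh.
Variables (K : nat) (chi : 'rV[R]_((4 * K + 5).+1)) (h : R) (p : nat).
Hypothesis Hp : ((p <= K) || (p == 4 * K + 4))%N.
Let Hpd : (p < (4 * K + 5).+1)%N.
Proof. by move: Hp; lia. Qed.

Lemma sh_th k : chi_th (sh chi h p) k = chi_th chi k.
Proof. by rewrite /chi_th sh_other //; move: Hp (ltn_ord k); lia. Qed.

Lemma sh_gam k : chi_gam (sh chi h p) k = chi_gam chi k.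
Proof. by rewrite /chi_gam !sh_other //; move: Hp (ltn_ord k); lia. Qed.

Lemma sh_dth : chi_dth (sh chi h p) = chi_dth chi.
Proof. by rewrite /chi_dth !sh_other //; move: Hp; lia. Qed.

Lemma sh_cc Nt (s : 'cV[R[i]]_Nt) k : cc s (sh chi h p) k = cc s chi k.
Proof. by rewrite /cc sh_gam sh_th sh_dth. Qed.
End Sh.

Lemma sh_tau_dt K (chi : 'rV[R]_((4 * K + 5).+1)) h (k : 'I_K.+1) :
  chi_tau (sh chi h (4 * K + 4)) k = chi_tau chi k.
Proof. by rewrite /chi_tau sh_other //; move: (ltn_ord k); lia. Qed.

Lemma sh_dtau_dt K (chi : 'rV[R]_((4 * K + 5).+1)) h :
  chi_dtau (sh chi h (4 * K + 4)) = chi_dtau chi + h.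
Proof. by rewrite /chi_dtau sh_same //; lia. Qed.

Lemma sh_dtau_j K (chi : 'rV[R]_((4 * K + 5).+1)) h (j : 'I_K.+1) :
  chi_dtau (sh chi h j) = chi_dtau chi.
Proof. by rewrite /chi_dtau sh_other //; move: (ltn_ord j); lia. Qed.

Lemma obs_sh_j N Nt K Ts s n (chi : 'rV[R]_((4 * K + 5).+1)) h (j : 'I_K.+1) :
  @obs R N Nt K Ts s n (sh chi h j) = @obs R N Nt K Ts s n chi +
   cc s chi j * (EE N Ts n (chi_tau chi j + chi_dtau chi + h) - EE N Ts n (chi_tau chi j + chi_dtau chi)).
Proof.
have Hj : ((nat_of_ord j <= K) || (nat_of_ord j == 4 * K + 4))%N by rewrite -ltnS ltn_ord.
rewrite !obsE (bigD1 j) //= [in RHS](bigD1 j) //=.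
have -> : \sum_(i < K.+1 | i != j) cc s (sh chi h j) i * EE N Ts n (chi_tau (sh chi h j) i + chi_dtau (sh chi h j))
  = \sum_(i < K.+1 | i != j) cc s chi i * EE N Ts n (chi_tau chi i + chi_dtau chi).
  apply: eq_bigr => k kj; rewrite sh_tau sh_dtau_j sh_cc //.
  have -> : ((j : nat) == k) = false by apply/negbTE; rewrite eq_sym.
  by rewrite addr0.
rewrite sh_tau eqxx sh_dtau_j sh_cc //.
set S := \sum_(i < K.+1 | i != j) _.
have -> : chi_tau chi j + h + chi_dtau chi = chi_tau chi j + chi_dtau chi + h by ring.
ring.
Qed.

Lemma obs_sh_dt N Nt K Ts s n (chi : 'rV[R]_((4 * K + 5).+1)) h :
  @obs R N Nt K Ts s n (sh chi h (4 * K + 4)) = @obs R N Nt K Ts s n chi +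
   \sum_(k < K.+1) cc s chi k * (EE N Ts n (chi_tau chi k + chi_dtau chi + h) - EE N Ts n (chi_tau chi k + chi_dtau chi)).
Proof.
rewrite !obsE -big_split; apply: eq_bigr => k _ /=.
rewrite sh_tau_dt sh_dtau_dt sh_cc ?eqxx ?orbT // addrA; ring.
Qed.

Lemma obs_key N Nt K Ts s n (chi : 'rV[R]_((4 * K + 5).+1)) h :
  @obs R N Nt K Ts s n (sh chi h (4 * K + 4)) - @obs R N Nt K Ts s n chi =
  \sum_(j < K.+1) (@obs R N Nt K Ts s n (sh chi h j) - @obs R N Nt K Ts s n chi).
Proof.
rewrite obs_sh_dt; set o := @obs R N Nt K Ts s n chi; rewrite (addrC o) addrK; apply: eq_bigr => j _.
by rewrite obs_sh_j (addrC o) addrK.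
Qed.

Lemma diff_aff (a b x : R) : differentiable (fun t : R => a + b * t) x.
Proof.
have -> : (fun t : R => a + b * t) = cst a + ( *:%R b) by apply/funext.
exact: differentiableD.
Qed.

Lemma der_cos_aff a b x : derivable (fun t : R => cos (a + b * t)) x 1.
Proof.
apply/derivable1_diffP.
apply: (@differentiable_comp _ _ _ _ (fun t => a + b * t) cos); first exact: diff_aff.
by apply/derivable1_diffP; exact: derivable_cos.
Qed.

Lemma der_sin_aff a b x : derivable (fun t : R => sin (a + b * t)) x 1.
Proof.
apply/derivable1_diffP.
apply: (@differentiable_comp _ _ _ _ (fun t => a + b * t) sin); first exact: diff_aff.
by apply/derivable1_diffP; exact: derivable_sin.
Qed.

Definition RI (b : bool) (x : R[i]) : R := if b then complex.Re x else complex.Im x.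

Lemma RID b x y : RI b (x + y) = RI b x + RI b y.
Proof. by case: b; case: x; case: y. Qed.
Lemma RIB b x y : RI b (x - y) = RI b x - RI b y.
Proof. by case: b; case: x; case: y. Qed.

Lemma der_RI_cexpj b z a c x :
  derivable (fun t : R => RI b (z * cexpj (a + c * t))) x 1.
Proof.
have [p [q E]] : exists p q, forall w, RI b (z * cexpj w) = p * cos w + q * sin w.
  case: b; case: z => zr zi.
    by exists zr, (- zi) => w /=; rewrite /cexpj /=; ring.
  by exists zi, zr => w /=; rewrite /cexpj /=; ring.
have -> : (fun t : R => RI b (z * cexpj (a + c * t))) =
   (p *: (fun t => cos (a + c * t))) + (q *: (fun t => sin (a + c * t))).
  by apply/funext => t /=; rewrite E.
apply: derivableD; apply: derivableZ; [exact: der_cos_aff | exact: der_sin_aff].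
Qed.

Lemma RI_sum b I (r : seq I) (P : pred I) (f : I -> R[i]) :
  RI b (\sum_(i <- r | P i) f i) = \sum_(i <- r | P i) RI b (f i).
Proof.
apply: (big_morph (RI b)); first exact: RID.
by case: b.
Qed.

Lemma der_j b N Nt K Ts s n (chi : 'rV[R]_((4 * K + 5).+1)) (j : 'I_K.+1) :
  derivable (fun x => RI b (@obs R N Nt K Ts s n x)) chi (delta_mx 0 (inord j)).
Proof.
apply/derivable1P.
set z := cc s chi j; set y := chi_tau chi j + chi_dtau chi.
have -> : (fun h : R => RI b (@obs R N Nt K Ts s n (h *: delta_mx 0 (inord j) + chi))) =
   cst (RI b (@obs R N Nt K Ts s n chi) - RI b (z * EE N Ts n y)) +
   (fun t => RI b (z * cexpj (- (2 * pi * n%:R * y / (N%:R * Ts)) + - (2 * pi * n%:R / (N%:R * Ts)) * t))).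
  apply/funext => h /=.
  rewrite -/(sh chi h j) obs_sh_j -/z -/y mulrBr RID RIB.
  have -> : EE N Ts n (y + h) = cexpj (- (2 * pi * n%:R * y / (N%:R * Ts)) + - (2 * pi * n%:R / (N%:R * Ts)) * h).
    by rewrite /EE; congr cexpj; ring.
  have E2 : forall a b c : R, a + (b - c) = (a - c) + b by move=> *; ring.
  by rewrite E2.
apply: derivableD; [exact: derivable_cst | exact: der_RI_cexpj].
Qed.

Lemma deriveS d (f : 'rV[R]_d -> R) x v :
  'D_v f x = 'D_1 (fun h : R => f (h *: v + x)) 0.
Proof.
rewrite /derive.
suff -> : (fun h : R => h^-1 *: ((f \o shift x) (h *: v) - f x)) =
  (fun h : R => h^-1 *: (((fun h => f (h *: v + x)) \o shift 0) (h *: 1) - (fun h => f (h *: v + x)) 0)) by [].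
apply/funext => h /=.
by rewrite addr0 scale0r add0r [_%:A]mulr1.
Qed.

Lemma D_key b N Nt K Ts s n (chi : 'rV[R]_((4 * K + 5).+1)) :
  'D_(delta_mx 0 (inord (4 * K + 4))) (fun x => RI b (@obs R N Nt K Ts s n x)) chi =
  \sum_(j < K.+1) 'D_(delta_mx 0 (inord j)) (fun x => RI b (@obs R N Nt K Ts s n x)) chi.
Proof.
set F := (fun x => RI b (@obs R N Nt K Ts s n x)).
have dj : forall j : 'I_K.+1, derivable (fun h : R => F (h *: delta_mx 0 (inord j) + chi)) 0 1.
  move=> j; have := ((derivable1P F chi (delta_mx 0 (inord j))).1 (@der_j b N Nt K Ts s n chi j)).
  by [].
rewrite deriveS.
have -> : (fun h : R => F (h *: delta_mx 0 (inord (4 * K + 4)) + chi)) =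
  cst (F chi) + \sum_(j < K.+1) ((fun h : R => F (h *: delta_mx 0 (inord j) + chi)) - cst (F chi)).
  apply/funext => h.
  have E := @obs_key N Nt K Ts s n chi h.
  change (F (sh chi h (4 * K + 4)) = F chi + (\sum_(j < K.+1) ((fun h : R => F (h *: delta_mx 0 (inord j) + chi)) - cst (F chi))) h).
  rewrite fct_sumE /F.
  have -> : @obs R N Nt K Ts s n (sh chi h (4 * K + 4)) = @obs R N Nt K Ts s n chi +
     \sum_(j < K.+1) (@obs R N Nt K Ts s n (sh chi h j) - @obs R N Nt K Ts s n chi).
    by rewrite -E addrC subrK.
  rewrite RID RI_sum; congr (_ + _); apply: eq_bigr => j _.
  by rewrite RIB.
clearbody F.
have dB : forall j : 'I_K.+1, derivable ((fun h : R => F (h *: delta_mx 0 (inord j) + chi)) - cst (F chi)) 0 1.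
  by move=> j; apply: derivableB => //; exact: derivable_cst.
rewrite deriveD; [|exact: derivable_cst|]; last first.
  by apply: derivable_sum.
rewrite derive_cst add0r.
rewrite derive_sum; last exact: dB.
apply: eq_bigr => j _.
rewrite deriveB; [|exact: dj|exact: derivable_cst].
by rewrite derive_cst subr0 (deriveS F chi).
Qed.

Definition vK K : 'rV[R]_((4 * K + 5).+1) :=
  \row_a (if (a < K.+1)%N then 1 else if (a == 4 * K + 4 :> nat) then -1 else 0).

Lemma sum_v K (X : 'I_((4 * K + 5).+1) -> R) :
  \sum_a vK K 0 a * X a = \sum_(j < K.+1) X (inord j) - X (inord (4 * K + 4)).
Proof.
have hd : (4 * K + 4 < (4 * K + 5).+1)%N by lia.
rewrite (bigD1 (inord (4 * K + 4))) //= mxE inordK //.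
have -> : (4 * K + 4 < K.+1)%N = false by lia.
rewrite eqxx mulN1r addrC; congr (_ - _).
transitivity (\sum_(a < (4 * K + 5).+1 | (a < K.+1)%N) X a).
  rewrite big_mkcond [RHS]big_mkcond /=; apply: eq_bigr => a _.
  rewrite mxE; case: (ltnP a K.+1) => ha.
    have -> : (a != inord (4 * K + 4)) by apply/eqP => E; move: ha; rewrite E inordK //; lia.
    by rewrite mul1r.
  case: eqP => [->|hne]; first by [].
  have -> : (a == 4 * K + 4 :> nat) = false.
    by apply/negbTE/eqP => E; apply: hne; apply: val_inj; rewrite /= inordK.
  by rewrite /= mul0r.
rewrite [RHS](@big_ord_widen _ _ _ K.+1 (4 * K + 5).+1 (fun m => X (inord m))); last by lia.
by apply: eq_bigr => a _; rewrite inord_val.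
Qed.

Lemma vK_neq0 K : vK K != 0.
Proof.
apply/eqP => /matrixP /(_ 0 (inord (4 * K + 4))); rewrite !mxE inordK; last by lia.
have -> : (4 * K + 4 < K.+1)%N = false by lia.
by rewrite eqxx => /eqP; rewrite oppr_eq0 oner_eq0.
Qed.

Lemma csum_split m (F G : 'I_m -> R) :
  ((\sum_j F j) +i* (\sum_j G j))%C = \sum_j (F j +i* G j)%C.
Proof.
elim: m F G => [|m IH] F G; first by rewrite !big_ord0.
rewrite !big_ord_recr /= -(IH (fun i => F (widen_ord (leqnSn m) i)) (fun i => G (widen_ord (leqnSn m) i))).
by [].
Qed.

Lemma Rcs_sum I (r : seq I) (P : pred I) (f : I -> R[i]) y :
  complex.Re (conjc (\sum_(i <- r | P i) f i) * y) = \sum_(i <- r | P i) complex.Re (conjc (f i) * y).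
Proof.
apply: (big_morph (fun x => complex.Re (conjc x * y))).
  by move=> [a b] [c d]; case: y => e f0 /=; ring.
by case: y => e f0 /=; ring.
Qed.

Lemma cpartial_key N Nt K Ts s n (chi : 'rV[R]_((4 * K + 5).+1)) :
  cpartial (@obs R N Nt K Ts s n) chi (inord (4 * K + 4)) =
  \sum_(j < K.+1) cpartial (@obs R N Nt K Ts s n) chi (inord j).
Proof.
have E1 := @D_key true N Nt K Ts s n chi.
have E2 := @D_key false N Nt K Ts s n chi.
rewrite /RI /= in E1 E2.
by rewrite /cpartial E1 E2 csum_split.
Qed.
End S.

Theorem proposition2 (R : realType) (N G Nt K : nat) (Ts sigma : R)
    (s : 'I_G -> 'I_N -> 'cV[R[i]]_Nt) (chi : 'rV[R]_((4 * K + 5).+1)) :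
  (0 < N)%N -> (0 < G)%N -> (0 < Nt)%N -> 0 < Ts -> 0 < sigma ->
  \det (FIM Ts sigma s chi) = 0.
Proof.
move=> _ _ _ _ _; apply/eqP/det0P; exists (vK R K); first exact: vK_neq0.
rewrite /FIM -scalemxAr mulmx_sumr big1 ?scaler0 // => n _.
rewrite mulmx_sumr big1 // => g _.
apply/rowP => b; rewrite mxE [RHS]mxE.
set cp := cpartial (@obs R N Nt K Ts (s g n) n) chi.
rewrite (eq_bigr (fun a => vK R K 0 a * complex.Re (conjc (cp a) * cp b))); last first.
  by move=> a _; rewrite [X in _ * X]mxE.
rewrite sum_v /cp cpartial_key.
by rewrite Rcs_sum subrr.
Qed.
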